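(* There exists $N$ such that for every integer $n\ge N$ there is a tree $T$ on $n$ vertices with the following property: for every (deterministic) strategy of the cat in the Cat and Mouse game on $T$, there is a sequence of mouse positions $(m_i)_{i\ge1}$ such that $\mathrm{rad}_T(M_i)>\sqrt{n}/12$ for every $i\ge1$; that is, the mouse avoids being localised up to distance $\sqrt{n}/12$ forever.
   Context: The Cat and Mouse game is played on a simple, undirected, connected graph $G$ with $n$ vertices, in discrete time steps $i=1,2,\dots$. The mouse occupies vertices $m_1,m_2,\dots$, where for $i\ge2$, $m_i$ equals $m_{i-1}$ or is a neighbour of $m_{i-1}$. At time $i$ the cat chooses (tests) an arbitrary vertex $c_i$. For $i\ge2$ the cat is told $b_i=1$ if $d(c_i,m_i)\le d(c_{i-1},m_{i-1})$ and $b_i=0$ otherwise, where $d$ is the graph distance. A strategy of the cat is a triple $(c_1,c_2,f)$ with $c_1,c_2\in V(G)$ and $f:\bigcup_{i\in\mathbb N}\{0,1\}^i\to V(G)$, meaning $c_i=f(b_2,\dots,b_{i-1})$ for $i\ge3$; it is fixed in advance and deterministic, and the mouse knows it (so the mouse's sequence may depend on it). $M_i$ is the set of vertices $v$ for which there exist $\tilde m_1,\dots,\tilde m_i$ with $\tilde m_i=v$, $\tilde m_j$ in the closed neighbourhood of $\tilde m_{j-1}$ for $2\le j\le i$, and for each $2\le j\le i$: $d(c_j,\tilde m_j)\le d(c_{j-1},\tilde m_{j-1})$ iff $b_j=1$. The radius of $W\subseteq V(G)$ is $\mathrm{rad}_G(W)=\min_{v\in V(G)}\max_{w\in W} d(v,w)$.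 *)

(* Defs.v *)
From mathcomp Require Import all_boot.
From mathcomp Require Import boolp.
From Stdlib Require Import Reals.

Set Implicit Arguments.
Unset Strict Implicit.
Unset Printing Implicit Defensive.

Section Game.
Variable T : finType.
Variable e : rel T.

Definition simple_graph := symmetric e /\ irreflexive e.
Definition connected_graph := forall x y : T, connect e x y.
Definition acyclic := ~ exists s : seq T, [&& uniq s, 2 < size s & cycle e s].
Definition is_tree := [/\ simple_graph, connected_graph & acyclic].

(* graph distance: least k such that there is an e-walk of length k from x to y
   (returns #|T| if no such walk, which cannot happen in a connected graph) *)
Definition dist (x y : T) : nat :=
  find (fun k => [exists p : k.-tuple T, path e x p && (last x p == y)])
       (iota 0 #|T|).

(* radius of W : min over v of max over w in W of d(v,w);
   #|T| is a harmless neutral element since dist <= #|T| *)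
Definition rad (W : {set T}) : nat :=
  \big[minn/#|T|]_(v : T) \max_(w in W) dist v w.

Definition mouse_walk (m : nat -> T) :=
  forall i, 2 <= i -> m i = m i.-1 \/ e (m i.-1) (m i).

Variables (c1 c2 : T) (f : seq bool -> T) (m : nat -> T).

(* state at time i (i >= 1): (bits [b_2; ...; b_i], c_i) *)
Fixpoint state (i : nat) : seq bool * T :=
  match i with
  | 0 => ([::], c1)
  | j.+1 =>
      if j == 0 then ([::], c1) else
      let: (b, c) := state j in
      let c' := if j.+1 == 2 then c2 else f b in
      (rcons b (dist c' (m j.+1) <= dist c (m j)), c')
  end.

Definition cpos (i : nat) : T := (state i).2.
Definition bit (i : nat) : bool := dist (cpos i) (m i) <= dist (cpos i.-1) (m i.-1).

Definition Mpred (i : nat) (v : T) : Prop :=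
  exists tm : nat -> T,
    [/\ tm i = v,
        (forall j, 2 <= j <= i -> tm j = tm j.-1 \/ e (tm j.-1) (tm j)) &
        (forall j, 2 <= j <= i ->
           (dist (cpos j) (tm j) <= dist (cpos j.-1) (tm j.-1)) = bit j)].

Definition Mset (i : nat) : {set T} := [set v | `[< Mpred i v >]].

End Game.

(* Main.v *)
Require Import Defs.
From mathcomp Require Import all_boot.
From mathcomp Require Import boolp.
From Stdlib Require Import Reals.
From Stdlib Require Import Lra.
From mathcomp Require Import zify.
Set Implicit Arguments. Unset Strict Implicit. Unset Printing Implicit Defensive.
Ltac slia := intros; repeat match goal with
  | H : _ \/ _ |- _ => destruct H
  | H : _ /\ _ |- _ => destruct H
  | H : _ <-> _ |- _ => destruct H
  end; lia.

Ltac snia := intros; repeat match goal with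
  | H : _ \/ _ |- _ => destruct H
  | H : _ /\ _ |- _ => destruct H
  | H : _ <-> _ |- _ => destruct H
  end; nia.

Definition dep (K v : nat) : nat := if v == 0 then 0 else (v.-1) %/ K + 1.
Definition leg (K v : nat) : nat := (v.-1) %% K.

Lemma decode K v : 0 < K -> v != 0 ->
  v = leg K v + (dep K v - 1) * K + 1 /\ leg K v < K /\ 1 <= dep K v.
Proof.
move=> HK Hv; rewrite /dep /leg (negbTE Hv) addnK.
split; last by split; [rewrite ltn_mod|rewrite addn1].
have := divn_eq v.-1 K. case: v Hv => // v _ /= H. lia.
Qed.

Lemma encode K l t : 0 < K -> l < K -> 1 <= t ->
  leg K (l + (t - 1) * K + 1) = l /\ dep K (l + (t-1) * K + 1) = t.
Proof.
move=> HK Hl Ht; rewrite /dep /leg addn1 /=.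
rewrite [l + _]addnC modnMDl divnMDl // (modn_small Hl) (divn_small Hl). lia.
Qed.

Lemma dep0 K v : dep K v = 0 <-> v = 0.
Proof. rewrite /dep; case: eqP => //; lia. Qed.

Definition pe (K p c : nat) : bool := if p == 0 then (0 < c <= K) else (c == p + K).

Lemma pe_dep K p c : 0 < K -> pe K p c ->
  c <> 0 /\ dep K c = dep K p + 1 /\ (p = 0 \/ leg K c = leg K p).
Proof.
move=> HK; rewrite /pe; case: eqP => [->|/eqP Hp].
  move=> /andP [H1 H2].
  have := @encode K (c - 1) 1 HK ltac:(lia) (leqnn 1).
  have -> : c - 1 + (1 - 1) * K + 1 = c by lia.
  rewrite /dep eqxx; lia.
move=> /eqP ->.
have [E [L D]] := decode HK Hp.
have := @encode K (leg K p) (dep K p + 1) HK L (leq_addl _ _).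
have -> : leg K p + (dep K p + 1 - 1) * K + 1 = p + K by nia.
lia.
Qed.

Definition dl (K u v : nat) : nat :=
  if [&& u != 0, v != 0 & leg K u == leg K v]
  then (dep K u - dep K v) + (dep K v - dep K u) else dep K u + dep K v.

Lemma dl_spec K u v :
  ((u = 0 \/ v = 0 \/ leg K u <> leg K v) /\ dl K u v = dep K u + dep K v) \/
  (u <> 0 /\ v <> 0 /\ leg K u = leg K v /\
     dl K u v = (dep K u - dep K v) + (dep K v - dep K u)).
Proof.
rewrite /dl; case: ifP => [/and3P [/eqP H1 /eqP H2 /eqP H3]|H]; first by right.
left; split => //. case: (u =P 0) => [|/eqP Hu]; first by left.
case: (v =P 0) => [|/eqP Hv]; first by right; left.
right; right => E; move: H; rewrite Hu Hv E eqxx //.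
Qed.

Lemma dl_step K x p c : 0 < K -> pe K p c ->
  dl K x c <= dl K x p + 1 /\ dl K x p <= dl K x c + 1.
Proof.
move=> HK Hpe; have [Hc [Hd Hl]] := pe_dep HK Hpe.
have D0 := dep0 K x; have D1 := dep0 K p.
case: (dl_spec K x c); case: (dl_spec K x p); slia.
Qed.

Definition sp (n K : nat) : rel 'I_n := fun u v => pe K u v || pe K v u.
Arguments sp : clear implicits.

Lemma sp_sym n K : symmetric (sp n K).
Proof. by move=> u v; rewrite /sp orbC. Qed.

Lemma sp_irr n K : 0 < K -> irreflexive (sp n K).
Proof. move=> HK u; rewrite /sp orbb /pe; case: eqP => [->//|_]. apply/negbTE/eqP; lia. Qed.

Lemma parent_ex K v : 0 < K -> v != 0 -> exists p, p < v /\ pe K p v.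
Proof.
move=> HK Hv; have [E [L D]] := decode HK Hv.
case: (dep K v =P 1) => Hd.
  exists 0; split; first lia. rewrite /pe /=. apply/andP; split; nia.
exists (v - K); split; first nia.
rewrite /pe; have -> : (v - K == 0) = false by apply/eqP; nia.
apply/eqP; nia.
Qed.

Lemma connect0 n K (r v : 'I_n) : 0 < K -> val r = 0 -> connect (sp n K) r v.
Proof.
move=> HK Hr; case: v => v; elim/ltn_ind: v => v IH Hvn.
case: (v =P 0) => [Hv0|/eqP Hv0].
  have -> : Ordinal Hvn = r by apply: val_inj; rewrite /= Hv0 Hr. exact: connect0.
have [p [Hpv Hpe]] := parent_ex HK Hv0.
have Hpn : p < n by apply: ltn_trans Hvn.
apply: connect_trans (IH p Hpv Hpn) _.
apply: connect1; by rewrite /sp /= Hpe.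
Qed.

Lemma sp_connected n K : 0 < K -> connected_graph (sp n K).
Proof.
move=> HK x y.
have Hn : 0 < n by case: x => x /= Hx; lia.
pose r : 'I_n := Ordinal Hn.
apply: (@connect_trans _ _ r).
  rewrite (sym_connect_sym (@sp_sym n K)). exact: connect0.
exact: connect0.
Qed.

Lemma pe_uniq K p1 p2 c : pe K p1 c -> pe K p2 c -> p1 = p2.
Proof.
rewrite /pe; case: (p1 =P 0) => [->|/eqP H1]; case: (p2 =P 0) => [->|/eqP H2] //; lia.
Qed.

Lemma seq_max (T : eqType) (F : T -> nat) (s : seq T) : s != [::] ->
  exists2 x, x \in s & forall y, y \in s -> F y <= F x.
Proof.
elim: s => // a s IH _; case: (s =P [::]) => [->|/eqP Hs].
  by exists a => [|y]; rewrite ?inE // => /eqP ->.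
have [x Hx Hm] := IH Hs.
case: (leqP (F a) (F x)) => Ha.
  exists x; first by rewrite inE Hx orbT.
  by move=> y; rewrite inE => /orP [/eqP ->|/Hm].
exists a; first by rewrite inE eqxx.
move=> y; rewrite inE => /orP [/eqP ->//|/Hm H]; lia.
Qed.

Lemma sp_acyclic n K : 0 < K -> acyclic (sp n K).
Proof.
move=> HK [s /and3P [Hu Hsz Hc]].
have Hs0 : s != [::] by apply/eqP => E0; rewrite E0 in Hsz.
have [x Hx Hmax] := seq_max (fun v : 'I_n => dep K v) Hs0.
have E := rot_index Hx.
have Hmem : forall w, w \in rot (index x s) s -> w \in s by move=> w; rewrite mem_rot.
rewrite -(rot_uniq (index x s)) E in Hu.
rewrite -(rot_cycle (index x s)) E in Hc.
have Hsz' := size_rot (index x s) s; rewrite E in Hsz' Hmem.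
move: Hu Hc Hsz' Hmem.
case: (drop _ _ ++ take _ _) => [|y [|z0 q]] Hu Hc Hsz' Hmem; try by (move: Hsz; rewrite -Hsz').
move: Hc; rewrite /= rcons_path /= => /andP [Hxy /andP [_ /andP [_ Hzx]]].
set z := last z0 q in Hzx.
have Hz : z \in z0 :: q by apply: mem_last.
move: Hu => /= /andP [_ /andP [Hy _]].
have Hyz : y != z by apply/eqP => E1; move: Hy; rewrite E1 Hz.
have Hdy := Hmax y (Hmem y (@mem_behead _ [:: x, y, z0 & q] y (mem_head _ _))).
have Hdz := Hmax z (Hmem z (@mem_behead _ [:: x, y, z0 & q] z (@mem_behead _ [:: y, z0 & q] z Hz))).
have Pyx : pe K y x.
  move: Hxy; rewrite /sp => /orP [H|//]. have [_ [H1 _]] := pe_dep HK H. simpl in *; lia.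
have Pzx : pe K z x.
  move: Hzx; rewrite /sp => /orP [//|H]. have [_ [H1 _]] := pe_dep HK H. simpl in *; lia.
move/eqP: Hyz; apply; apply: val_inj; exact: pe_uniq Pyx Pzx.
Qed.

Lemma dl_sym K u v : dl K u v = dl K v u.
Proof. case: (dl_spec K u v); case: (dl_spec K v u); slia. Qed.

Lemma find_iota0 (a : pred nat) n k : k < n -> a k ->
  (forall j, j < k -> ~~ a j) -> find a (iota 0 n) = k.
Proof.
move=> Hkn Hak Hb.
have Hh : has a (iota 0 n) by apply/hasP; exists k => //; rewrite mem_iota.
have Hj := Hh; rewrite has_find size_iota in Hj.
have Ha := nth_find 0 Hh; rewrite nth_iota // add0n in Ha.
case: (ltngtP (find a (iota 0 n)) k) => // H.
  by move: (Hb _ H); rewrite Ha.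
by move: (before_find 0 H); rewrite nth_iota // add0n Hak.
Qed.

Lemma dep_le K v : 0 < K -> dep K v <= v.
Proof.
move=> HK; case: (v =P 0) => [->//|/eqP Hv]. have [E [L D]] := decode HK Hv. nia.
Qed.

Lemma dl_lt_n n K (x y : 'I_n) : 2 < K -> dl K x y < n.
Proof.
move=> HK.
have Hx := ltn_ord x; have Hy := ltn_ord y.
have HK0 : 0 < K by lia.
have Dx := dep_le (nat_of_ord x) HK0; have Dy := dep_le (nat_of_ord y) HK0.
case: (nat_of_ord x =P 0) => [E0|/eqP Hx0].
  have := dep0 K (nat_of_ord x); case: (dl_spec K x y); slia.
case: (nat_of_ord y =P 0) => [E0|/eqP Hy0].
  have := dep0 K (nat_of_ord y); case: (dl_spec K x y); slia.
have [Ex [Lx Dx1]] := decode HK0 Hx0; have [Ey [Ly Dy1]] := decode HK0 Hy0.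
have M1 : 3 * (dep K x - 1) <= K * (dep K x - 1) by apply: leq_mul; lia.
have M2 : 3 * (dep K y - 1) <= K * (dep K y - 1) by apply: leq_mul; lia.
case: (dl_spec K x y); snia.
Qed.

Lemma path_lb n K x0 : 0 < K -> forall p (z : 'I_n),
  path (sp n K) z p -> dl K x0 (last z p) <= dl K x0 z + size p.
Proof.
move=> HK; elim => [|y p IH] z /=; first by rewrite addn0.
move=> /andP [Hzy Hp]; have := IH _ Hp.
have : dl K x0 y <= dl K x0 z + 1.
  move: Hzy; rewrite /sp => /orP [H|H]; have := dl_step x0 HK H; lia.
lia.
Qed.

Lemma next_ex n K (x y : 'I_n) : 0 < K -> 0 < dl K x y ->
  exists x' : 'I_n, sp n K x x' /\ dl K x' y = (dl K x y).-1.
Proof.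
move=> HK Hd.
have Hxn := ltn_ord x; have Hyn := ltn_ord y.
have X0 := dep0 K x; have Y0 := dep0 K y.
case: (nat_of_ord x =P 0) => [Ex|/eqP Hx0].
  have Hy0 : nat_of_ord y != 0.
    apply/eqP => Ey; move: Hd; case: (dl_spec K x y); slia.
  have [Ey [Ly Dy]] := decode HK Hy0.
  have Hw : leg K y + 1 < n by lia.
  exists (Ordinal Hw).
  have [L1 D1] := @encode K (leg K y) 1 HK Ly (leqnn 1).
  rewrite subnn mul0n addn0 in L1 D1.
  split.
    by rewrite /sp /= /pe Ex /=; apply/orP; left; apply/andP; split; lia.
  move: Hd; case: (dl_spec K (Ordinal Hw) y); case: (dl_spec K x y); simpl in *; slia.
have [Ex [Lx Dx]] := decode HK Hx0.
case: (boolP [&& nat_of_ord y != 0, leg K x == leg K y & dep K x < dep K y]).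
  move=> /and3P [Hy0 /eqP Hl Hlt].
  have [Ey [Ly Dy]] := decode HK Hy0.
  have Hw : x + K < n by nia.
  exists (Ordinal Hw).
  have Hpe : pe K x (x + K) by rewrite /pe (negbTE Hx0).
  have [W0 [W1 W2]] := pe_dep HK Hpe.
  split; first by rewrite /sp /= Hpe.
  move: Hd; case: (dl_spec K (Ordinal Hw) y); case: (dl_spec K x y); simpl in *; slia.
move=> Hn.
have [p [Hpx Hpe]] := parent_ex HK Hx0.
have Hw : p < n by lia.
exists (Ordinal Hw).
have [W0 [W1 W2]] := pe_dep HK Hpe.
have P0 := dep0 K p.
split; first by rewrite /sp /= Hpe orbT.
have Hn' : ~ [/\ nat_of_ord y <> 0, leg K x = leg K y & dep K x < dep K y].
  move=> [H1 H2 H3]; move: Hn; rewrite H2 eqxx H3 andbT; by move/eqP: H1 => ->.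
move: Hd; case: (dl_spec K (Ordinal Hw) y); case: (dl_spec K x y); simpl in *; slia.
Qed.

Lemma walk_ex n K : 0 < K -> forall k (x y : 'I_n), dl K x y = k ->
  exists p : seq 'I_n, [/\ size p = k, path (sp n K) x p & last x p = y].
Proof.
move=> HK; elim => [|k IH] x y Hd.
  exists [::]; split => //=. apply: val_inj.
  move: Hd; have := dep0 K x; have := dep0 K y.
  case: (nat_of_ord x =P 0) => [Ex0|/eqP Hx0]; first by case: (dl_spec K x y); simpl; slia.
  case: (nat_of_ord y =P 0) => [Ey0|/eqP Hy0]; first by case: (dl_spec K x y); simpl; slia.
  have [Ex [Lx Dx]] := decode HK Hx0; have [Ey [Ly Dy]] := decode HK Hy0.
  case: (dl_spec K x y); simpl; snia.
have [x' [Hxx' Hd']] := next_ex HK (ltac:(lia) : 0 < dl K x y).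
rewrite Hd /= in Hd'.
have [p [Hs Hp Hl]] := IH x' y Hd'.
by exists (x' :: p); split => //=; rewrite ?Hs ?Hxx'.
Qed.

Lemma dist_eq n K (x y : 'I_n) : 2 < K -> Defs.dist (sp n K) x y = dl K x y.
Proof.
move=> HK; have HK0 : 0 < K by lia.
rewrite /Defs.dist card_ord; apply: find_iota0; first exact: dl_lt_n.
  have [p [Hs Hp Hl]] := walk_ex HK0 (erefl (dl K x y)).
  apply/existsP; exists (Tuple (introT eqP Hs)); by rewrite /= Hp Hl eqxx.
move=> j Hj; apply/existsP => [[p /andP [Hp /eqP Hl]]].
have := path_lb x HK0 Hp; rewrite Hl size_tuple.
have -> : dl K x x = 0 by have := dep0 K x; case: (dl_spec K x x); slia.
lia.
Qed.

Definition beta (K c c' : nat) (h : nat -> nat) : bool :=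
  (dep K c' < dep K c) ||
  ((dep K c' == dep K c) && ((dep K c == 0) || (h (leg K c) == 0))).

Definition stallp (K c c' : nat) (h : nat -> nat) : bool :=
  (dep K c' == dep K c) && ((dep K c == 0) || (h (leg K c) == 0)).

Definition hupd (K c c' : nat) (h : nat -> nat) : nat -> nat :=
  if stallp K c c' h then h else
  let X := if dep K c' < dep K c then leg K c else leg K c' in
  fun l => if l == X then 0 else (h l).+1.

Definition Gh (K : nat) (h : nat -> nat) (v : nat) : bool :=
  (v == 0) || ((0 < dep K v) && (dep K v <= h (leg K v))).

Lemma dl_le_sum K u v : dl K u v <= dep K u + dep K v.
Proof. case: (dl_spec K u v); slia. Qed.

Lemma dl_diff K u v : (u = 0 \/ v = 0 \/ leg K u <> leg K v) ->
  dl K u v = dep K u + dep K v.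
Proof. rewrite /dl; case: and3P => // [[/eqP H1 /eqP H2 /eqP H3]] [//|[//|//]]. Qed.

Lemma dl_same K u v : u <> 0 -> v <> 0 -> leg K u = leg K v ->
  dl K u v = (dep K u - dep K v) + (dep K v - dep K u).
Proof. move=> /eqP H1 /eqP H2 H3; by rewrite /dl H3 eqxx H1 H2. Qed.

Lemma dl_r0 K u v : v = 0 -> dl K u v = dep K u.
Proof. move=> Hv; rewrite dl_diff; last by right; left. by rewrite Hv /dep eqxx addn0. Qed.

Lemma Gh_parent K (h : nat -> nat) (w p : nat) : 0 < K -> pe K p w ->
  0 < dep K w -> dep K w <= (h (leg K w)).+1 -> Gh K h p.
Proof.
move=> HK Hpe H1 H2; have [W1 [W2 W3]] := pe_dep HK Hpe.
rewrite /Gh; case: (p =P 0) => [//|/eqP Hp0] /=.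
have Hl : leg K w = leg K p by case: W3 => //; move/eqP: Hp0.
have : 0 < dep K p by rewrite lt0n; apply/eqP => /dep0 E; rewrite E eqxx in Hp0.
move: H2; rewrite Hl W2 => H2 H3; apply/andP; split => //; lia.
Qed.

Lemma grow_fact K (X : nat) (h : nat -> nat) w :
  Gh K (fun l => if l == X then 0 else (h l).+1) w ->
  w = 0 \/ [/\ 0 < dep K w, leg K w <> X & dep K w <= (h (leg K w)).+1].
Proof.
rewrite /Gh; case/orP => [/eqP ->|/andP [H1 H2]]; first by left.
right; move: H2; case: eqP => [_ H2|HX H2]; first by lia.
by split.
Qed.

Lemma key_step n K (c c' w : 'I_n) h : 0 < K ->
  Gh K (hupd K c c' h) w ->
  exists u : 'I_n, [/\ Gh K h u, u = w \/ sp n K u w &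
     (dl K c' w <= dl K c u) = beta K c c' h].
Proof.
move=> HK; rewrite /hupd /beta /stallp.
have Hparent : forall X, Gh K (fun l => if l == X then 0 else (h l).+1) w ->
    nat_of_ord w <> 0 -> exists p : 'I_n, [/\ Gh K h p, sp n K p w,
       leg K w <> X, dep K w = dep K p + 1 & dl K c p <= dep K c + dep K p].
  move=> X HG Hw0.
  have [//|[H1 HX H2]] := grow_fact HG.
  have [p [Hpw Hpe]] := parent_ex HK (introN eqP Hw0).
  have Hpn : p < n by have := ltn_ord w; lia.
  have [W1 [W2 W3]] := pe_dep HK Hpe.
  exists (Ordinal Hpn); split => //.
  - exact: Gh_parent HK Hpe H1 H2.
  - by rewrite /sp /= Hpe.
  - exact: dl_le_sum.
case: (ltngtP (dep K c') (dep K c)) => Hab /=.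
- move=> HG; case: (nat_of_ord w =P 0) => [Hw|Hw0].
    exists w; split; [by rewrite /Gh Hw eqxx|by left|].
    by rewrite (dl_r0 _ _ Hw) (dl_r0 _ _ Hw) ltnW.
  have [p [Hp Hsp HX Hd _]] := Hparent _ HG Hw0.
  exists p; split => //; first by right.
  have E1 := dl_le_sum K c' w.
  have W3 : p = 0 :> nat \/ leg K w = leg K p.
    case: (nat_of_ord p =P 0) => [|Hp0]; [by left|right].
    move: Hsp; rewrite /sp => /orP [H|H]; first by have [_ [_ [//|//]]] := pe_dep HK H.
    have [_ [H2 _]] := pe_dep HK H; lia.
  have E2 : dl K c p = dep K c + dep K p.
    apply: dl_diff; case: W3 => [H|H]; [by right; left|by right; right; rewrite -H => /esym].
  rewrite E2; apply/idP; clear -E1 Hd Hab; lia.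
- move=> HG; case: (nat_of_ord w =P 0) => [Hw|Hw0].
    exists w; split; [by rewrite /Gh Hw eqxx|by left|].
    rewrite (dl_r0 _ _ Hw) (dl_r0 _ _ Hw); apply/negbTE; by rewrite -ltnNge.
  have [p [Hp Hsp HX Hd E2]] := Hparent _ HG Hw0.
  exists p; split => //; first by right.
  have E1 : dl K c' w = dep K c' + dep K w.
    by apply: dl_diff; right; right => /esym.
  rewrite E1; apply/negbTE; rewrite -ltnNge; clear -E2 Hd Hab; lia.
- rewrite ?eqxx /=.
  case Hs: ((dep K c == 0) || (h (leg K c) == 0)) => HG.
    exists w; split => //; first by left.
    apply/idP; case/orP: Hs => [/eqP Ha|/eqP HA].
      have Ec : nat_of_ord c = 0 by exact: (proj1 (dep0 K c) Ha).
      have Ec' : nat_of_ord c' = 0 by apply: (proj1 (dep0 K c')); rewrite Hab.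
      by rewrite Ec Ec'.
    case/orP: HG => [/eqP Hw|/andP [H1 H2]].
      by rewrite (dl_r0 _ _ Hw) (dl_r0 _ _ Hw) Hab.
    have Hl : leg K c <> leg K w by move=> E; rewrite -E HA in H2; lia.
    have E1 : dl K c w = dep K c + dep K w by apply: dl_diff; right; right.
    have E2 := dl_le_sum K c' w.
    rewrite E1; clear -E2 Hab; lia.
  move: Hs => /negbT; rewrite negb_or => /andP [Ha HA].
  case: (nat_of_ord w =P 0) => [Hw|Hw0].
    have Hc0 : nat_of_ord c != 0 by apply/eqP => E; move: Ha; rewrite (proj2 (dep0 K c) E).
    have [Ec [Lc Dc]] := decode HK Hc0.
    have Hu : leg K c + 1 < n by have := ltn_ord c; nia.
    have [L1 D1] := @encode K (leg K c) 1 HK Lc (leqnn 1).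
    rewrite subnn mul0n addn0 in L1 D1.
    exists (Ordinal Hu); split.
    + by rewrite /Gh /= L1 D1 /= lt0n HA orbT.
    + right; rewrite /sp /= /pe Hw /=; apply/orP; right; apply/andP; split; [by rewrite addn1|by rewrite addn1].
    + have E1 : dl K c (leg K c + 1) = dep K c - 1.
        rewrite dl_same ?L1 ?D1 //; [|by move/eqP: Hc0|by rewrite addn1].
        clear -Dc; lia.
      rewrite (dl_r0 _ _ Hw) /= E1 Hab; apply/negbTE; rewrite -ltnNge; clear -Dc; lia.
  have [p [Hp Hsp HX Hd E2]] := Hparent _ HG Hw0.
  exists p; split => //; first by right.
  have E1 : dl K c' w = dep K c' + dep K w.
    by apply: dl_diff; right; right => /esym.
  rewrite E1; apply/negbTE; rewrite -ltnNge; clear -E2 Hd Hab; lia.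
Qed.

Lemma unif_bound (T : finType) (Q : T -> nat -> Prop) :
  (forall v k k', k <= k' -> Q v k -> Q v k') ->
  (forall v, exists k, Q v k) -> exists k, forall v, Q v k.
Proof.
move=> Hup Hex; have [kf Hkf] := choice Hex.
exists (\max_(v : T) kf v) => v; apply: (Hup v (kf v)) (Hkf v).
exact: (@leq_bigmax _ (fun v => kf v) v).
Qed.

Lemma konig (T : finType) (P : nat -> T -> T -> Prop) :
  (forall i, exists tm : nat -> T, forall j, 2 <= j <= i -> P j (tm j.-1) (tm j)) ->
  exists m : nat -> T, forall j, 2 <= j -> P j (m j.-1) (m j).
Proof.
move=> Hall.
pose good i v := forall k, exists tm : nat -> T,
  tm i = v /\ forall j, i < j <= k -> P j (tm j.-1) (tm j).
have A : exists v, good 1 v.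
  apply: contrapT => Hn.
  have H1 : forall v, exists k, ~ exists tm : nat -> T,
      tm 1 = v /\ forall j, 1 < j <= k -> P j (tm j.-1) (tm j).
    move=> v; apply: contrapT => Hv; apply: Hn; exists v => k.
    apply: contrapT => Hk; apply: Hv; by exists k.
  have [k Hk] : exists k, forall v, ~ exists tm : nat -> T,
      tm 1 = v /\ forall j, 1 < j <= k -> P j (tm j.-1) (tm j).
    apply: (unif_bound _ H1).
    move=> v k1 k2 Hle Hno [tm [H0 Htm]]; apply: Hno; exists tm; split => // j /andP [Hj1 Hj2].
    apply: Htm; rewrite Hj1; exact: leq_trans Hj2 Hle.
  have [tm Htm] := Hall k.
  by apply: (Hk (tm 1)); exists tm; split.
have B : forall i v, good i v -> exists w, P i.+1 v w /\ good i.+1 w.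
  move=> i v Hg; apply: contrapT => Hn.
  have H1 : forall w, exists k, ~ P i.+1 v w \/ ~ exists tm : nat -> T,
      tm i.+1 = w /\ forall j, i.+1 < j <= k -> P j (tm j.-1) (tm j).
    move=> w; case: (pselect (P i.+1 v w)) => Hp; last by exists 0; left.
    apply: contrapT => Hw; apply: Hn; exists w; split => // k.
    apply: contrapT => Hk; apply: Hw; exists k; by right.
  have [k Hk] : exists k, forall w, ~ P i.+1 v w \/ ~ exists tm : nat -> T,
      tm i.+1 = w /\ forall j, i.+1 < j <= k -> P j (tm j.-1) (tm j).
    apply: (unif_bound _ H1).
    move=> w k1 k2 Hle [Hno|Hno]; [by left|right] => [[tm [H0 Htm]]].
    apply: Hno; exists tm; split => // j /andP [Hj1 Hj2].
    apply: Htm; rewrite Hj1; exact: leq_trans Hj2 Hle.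
  have [tm [Hv Htm]] := Hg (maxn k i.+1).
  have Hp : P i.+1 v (tm i.+1).
    by rewrite -Hv; apply: (Htm i.+1); rewrite ltnSn /= leq_maxr.
  case: (Hk (tm i.+1)) => // Hno; apply: Hno; exists tm; split => // j /andP [Hj1 Hj2].
  apply: Htm; rewrite (ltn_trans (ltnSn i) Hj1) /=; exact: leq_trans Hj2 (leq_maxl _ _).
have [v1 Hv1] := A.
pose nxt i v := odflt v [pick w | `[< P i.+1 v w /\ good i.+1 w >] ].
have Hnxt : forall i v, good i v -> P i.+1 v (nxt i v) /\ good i.+1 (nxt i v).
  move=> i v Hg; rewrite /nxt; case: pickP => [w /asboolP //|Hnone].
  have [w Hw] := B i v Hg; by move: (Hnone w) => /asboolPn.
pose mseq := fix g k := if k is k'.+1 then nxt k (g k') else v1.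
have Hms : forall k, good k.+1 (mseq k).
  elim => [//|k IH] /=; exact: (Hnxt _ _ IH).2.
exists (fun j => mseq j.-1) => j Hj.
case: j Hj => [//|[//|j]] _ /=.
exact: (Hnxt _ _ (Hms j)).1.
Qed.

Record gst (n : nat) := GS { gbs : seq bool; gc : 'I_n; gh : nat -> nat }.

Fixpoint gs n K (c1 c2 : 'I_n) (f : seq bool -> 'I_n) (i : nat) : gst n :=
  match i with
  | 0 => GS [::] c1 (fun _ => K)
  | j.+1 =>
      if j == 0 then GS [::] c1 (fun _ => K) else
      let s := gs K c1 c2 f j in
      let c' := if j.+1 == 2 then c2 else f (gbs s) in
      GS (rcons (gbs s) (beta K (gc s) c' (gh s))) c' (hupd K (gc s) c' (gh s))
  end.

Definition stp n K (c1 c2 : 'I_n) f i (u w : 'I_n) : Prop :=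
  (u = w \/ sp n K u w) /\
  (dl K (gc (gs K c1 c2 f i)) w <= dl K (gc (gs K c1 c2 f i.-1)) u) =
    beta K (gc (gs K c1 c2 f i.-1)) (gc (gs K c1 c2 f i)) (gh (gs K c1 c2 f i.-1)).

Lemma gs_h n K (c1 c2 : 'I_n) f i : 0 < i ->
  gh (gs K c1 c2 f i.+1) = hupd K (gc (gs K c1 c2 f i)) (gc (gs K c1 c2 f i.+1)) (gh (gs K c1 c2 f i)).
Proof. by case: i. Qed.

Lemma traj n K (c1 c2 : 'I_n) f : 0 < K -> forall i, 0 < i -> forall w : 'I_n,
  Gh K (gh (gs K c1 c2 f i)) w ->
  exists tm : nat -> 'I_n, tm i = w /\
    forall j, 2 <= j <= i -> stp K c1 c2 f j (tm j.-1) (tm j).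
Proof.
move=> HK; elim => [//|i IH] _ w.
case: (posnP i) => [->|Hi] Hw.
  exists (fun _ => w); split => // j /andP [H1 H2]; lia.
rewrite gs_h // in Hw.
have [u [Hu Huw Hb]] := key_step HK Hw.
have [tm [Htm Hst]] := IH Hi u Hu.
exists (fun j => if j == i.+1 then w else tm j); split; first by rewrite eqxx.
move=> j /andP [H1 H2].
case: (ltngtP j i.+1) => Hj; last 1 first.
- rewrite Hj /= ?eqxx; have -> : (i == i.+1) = false by lia.
  by rewrite Htm; split.
- have E1 : (j == i.+1) = false by lia.
  have E2 : (j.-1 == i.+1) = false by lia.
  rewrite ?E1 ?E2.
  apply: Hst; rewrite H1 /=; lia.
- lia.
Qed.

Lemma sum_cst K c : \sum_(l < K) c = K * c.
Proof. elim: K => [|K IH]; rewrite ?big_ord0 // big_ord_recr /= IH; lia. Qed.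

Lemma sum_eqp K p : \sum_(l < K) ((nat_of_ord l == p) : nat) = (p < K).
Proof.
elim: K => [|K IH]; first by rewrite big_ord0.
rewrite big_ord_recr /= IH; case: (ltngtP p K) => H //=; try lia.
Qed.

Lemma count_step K c c' (h : nat -> nat) :
  (forall j, \sum_(l < K) (h l < j : nat) <= j) ->
  forall j, \sum_(l < K) (hupd K c c' h l < j : nat) <= j.
Proof.
move=> IH j; rewrite /hupd; case: (stallp K c c' h); first exact: IH.
set X := if _ then _ else _.
case: j => [|j].
  by rewrite big1 // => l _; rewrite ltn0.
apply: (@leq_trans (\sum_(l < K) (((nat_of_ord l == X) : nat) + (h l < j : nat)))).
  apply: leq_sum => l _; case: eqP => //= _; rewrite ltnS; case: (h l < j) => //.
rewrite big_split /= sum_eqp.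
have := IH j; case: (X < K) => /=; lia.
Qed.

Lemma witness K D (h : nat -> nat) p : K = D.+2 ->
  \sum_(l < K) (h l < D : nat) <= D -> exists l, [/\ l < K, l <> p & D <= h l].
Proof.
move=> HKD Hs; apply: contrapT => Hn.
have Hall : forall l : 'I_K, 1 <= (h l < D : nat) + ((nat_of_ord l == p) : nat).
  move=> l; case: (nat_of_ord l =P p) => [_|Hp]; first by rewrite addn1.
  case: (ltnP (h l) D) => // Hle; exfalso; apply: Hn; exists l; split => //.
have : \sum_(l < K) 1 <= \sum_(l < K) ((h l < D : nat) + ((nat_of_ord l == p) : nat)).
  by apply: leq_sum => l _; exact: Hall l.
rewrite big_split /= sum_cst sum_eqp => H.
have := leq_trans H (leq_add Hs (leq_b1 (p < K))); lia.
Qed.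

Lemma rad_lb n (e : rel 'I_n) (W : {set 'I_n}) D : D <= n ->
  (forall v, exists2 w, w \in W & D <= Defs.dist e v w) -> D <= rad e W.
Proof.
move=> HD H; rewrite /rad.
apply: (big_ind (fun x => D <= x)); first by rewrite card_ord.
  by move=> x y Hx Hy; rewrite leq_min Hx Hy.
move=> v _; have [w Hw Hd] := H v.
apply: leq_trans Hd _; exact: (leq_bigmax_cond _ Hw).
Qed.

Lemma count_inv n K (c1 c2 : 'I_n) f : forall i, 0 < i -> forall j,
  \sum_(l < K) (gh (gs K c1 c2 f i) l < j : nat) <= j.
Proof.
elim => // i IH _; case: (posnP i) => [->|Hi] j.
  rewrite /= sum_cst; case: ltnP => /= H; lia.
rewrite gs_h //; apply: count_step; exact: IH.
Qed.

Lemma gs_c n K (c1 c2 : 'I_n) f i : 0 < i ->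
  gc (gs K c1 c2 f i.+1) = if i.+1 == 2 then c2 else f (gbs (gs K c1 c2 f i)).
Proof. by case: i. Qed.

Lemma state_eq n K (c1 c2 : 'I_n) f (m : nat -> 'I_n) : 2 < K ->
  (forall j, 2 <= j -> stp K c1 c2 f j (m j.-1) (m j)) ->
  forall i, 0 < i ->
  state (sp n K) c1 c2 f m i = (gbs (gs K c1 c2 f i), gc (gs K c1 c2 f i)).
Proof.
move=> HK Hm; elim => // i IH _; case: (posnP i) => [->//|Hi].
have [_ Hb] := Hm i.+1 ltac:(lia).
rewrite /= in Hb.
rewrite /=; have -> : (i == 0) = false by lia.
rewrite IH //.
rewrite !dist_eq //.
rewrite gs_c // in Hb.
case: i IH Hi Hb => // i IH Hi Hb.
by rewrite /= Hb.
Qed.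
Lemma real_part (n D r : nat) : (n < (12 * D) * (12 * D))%N -> (D <= r)%N ->
  (sqrt (INR n) / 12 < INR r)%R.
Proof.
move=> H1 H2.
have E : INR (12 * D * (12 * D)) = ((12 * INR D) * (12 * INR D))%R.
  rewrite !mult_INR. rewrite (INR_IZR_INZ 12) /=. ring.
have L1 : (INR n < (12 * INR D) * (12 * INR D))%R.
  rewrite -E; apply: lt_INR; apply/ltP; exact: H1.
have L2 : (INR D <= INR r)%R by apply: le_INR; apply/leP.
have L3 : (0 <= INR D)%R by apply: pos_INR.
have L4 : (sqrt (INR n) < 12 * INR D)%R.
  rewrite -(sqrt_square (12 * INR D)); last lra.
  apply: sqrt_lt_1_alt; split; [exact: pos_INR|exact: L1].
lra.
Qed.
Lemma arith n : (1296 <= n)%N ->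
  ((Nat.sqrt n %/ 12 + 1) * (Nat.sqrt n %/ 12 + 1).+2 < n)%N /\
  (n < (12 * (Nat.sqrt n %/ 12 + 1)) * (12 * (Nat.sqrt n %/ 12 + 1)))%N.
Proof.
move=> Hn.
have [Hs1 Hs2] := Nat.sqrt_spec' n.
set s := Nat.sqrt n in Hs1 Hs2 *.
have Hs : (36 <= s)%N by nia.
have E := divn_eq s 12; have R := ltn_pmod s (isT : (0 < 12)%N).
set x := s %/ 12 in E *; set r := s %% 12 in E R.
have Hx : (3 <= x)%N by lia.
split.
- nia.
- nia.
Qed.

Theorem theorem1p2 :
  exists N : nat, forall n : nat, N <= n ->
    exists e : rel 'I_n,
      is_tree e /\
      forall (c1 c2 : 'I_n) (f : seq bool -> 'I_n),
        exists m : nat -> 'I_n,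
          mouse_walk e m /\
          forall i : nat, 1 <= i ->
            (sqrt (INR n) / 12 < INR (rad e (Mset e c1 c2 f m i)))%R.
Proof.
exists 1296 => n Hn.
have [HDK Hsq] := arith Hn.
set D := Nat.sqrt n %/ 12 + 1 in HDK Hsq.
pose K := D.+2.
have HK : 2 < K by rewrite /K; lia.
have HK0 : 0 < K by lia.
exists (sp n K); split.
  split; [split; [exact: sp_sym|exact: sp_irr]|exact: sp_connected|exact: sp_acyclic].
move=> c1 c2 f.
have Hn0 : 0 < n by lia.
pose r : 'I_n := Ordinal Hn0.
have Htraj : forall i, exists tm : nat -> 'I_n,
    forall j, 2 <= j <= i -> stp K c1 c2 f j (tm j.-1) (tm j).
  move=> i.
  have Hr : Gh K (gh (gs K c1 c2 f i.+1)) r by rewrite /Gh eqxx.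
  have [tm [_ H]] := @traj n K c1 c2 f HK0 i.+1 (ltn0Sn i) r Hr.
  exists tm => j /andP [H1 H2]; apply: H; rewrite H1 /=; lia.
have [m Hm] := konig Htraj.
exists m; split.
  move=> i Hi; have [[E|E] _] := Hm i Hi; [left; by rewrite E|right; exact: E].
move=> i Hi.
have Hst := state_eq HK Hm.
have Hcpos : forall j, 0 < j -> cpos (sp n K) c1 c2 f m j = gc (gs K c1 c2 f j).
  by move=> j Hj; rewrite /cpos Hst.
have Hbit : forall j, 2 <= j -> bit (sp n K) c1 c2 f m j =
    beta K (gc (gs K c1 c2 f j.-1)) (gc (gs K c1 c2 f j)) (gh (gs K c1 c2 f j.-1)).
  move=> j Hj; rewrite /bit !Hcpos ?dist_eq //; [exact: (Hm j Hj).2|lia|lia].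
have HM : forall w : 'I_n, Gh K (gh (gs K c1 c2 f i)) w -> w \in Mset (sp n K) c1 c2 f m i.
  move=> w Hw; rewrite /Mset inE; apply/asboolP.
  have [tm [Htm Hsteps]] := @traj n K c1 c2 f HK0 i Hi w Hw.
  exists tm; split => //.
    move=> j Hj; have [[E|E] _] := Hsteps j Hj; [left; by rewrite E|right; exact: E].
  move=> j Hj; have [_ Hb] := Hsteps j Hj.
  have Hj1 : 0 < j by lia.
  have Hj2 : 0 < j.-1 by lia.
  rewrite Hbit; last by lia.
  by rewrite (Hcpos j Hj1) (Hcpos j.-1 Hj2) !dist_eq.
have Hrad : D <= rad (sp n K) (Mset (sp n K) c1 c2 f m i).
  apply: rad_lb; first lia.
  move=> v.
  have [l [Hl Hlp HDl]] := @witness K D (gh (gs K c1 c2 f i))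
      (if nat_of_ord v == 0 then 0 else leg K v) (erefl K) (@count_inv n K c1 c2 f i Hi D).
  have Hw : l + (D - 1) * K + 1 < n by nia.
  have [L1 D1] := @encode K l D HK0 Hl ltac:(lia).
  exists (Ordinal Hw).
    apply: HM; rewrite /Gh /= L1 D1 /=; apply/orP; right; apply/andP; split; lia.
  rewrite dist_eq //.
  have V0 := dep0 K v.
  move: Hlp; case: (nat_of_ord v =P 0) => [Hv|/eqP Hv] Hlp.
    case: (dl_spec K v (Ordinal Hw)); simpl; lia.
  case: (dl_spec K v (Ordinal Hw)); simpl; lia.
exact: real_part Hsq Hrad.
Qed.
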